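(* Let $(\mathcal C,S,T)$ be a unital association schemoid. (i) For every $\sigma\in S$ there exists a unique $\alpha\in S_0$ with $p^\sigma_{\sigma\alpha}=1$; moreover $p^\sigma_{\sigma\alpha'}=0$ for all $\alpha'\in S_0$ with $\alpha'\neq\alpha$. (ii) For every $\sigma\in S$ there exists a unique $\beta\in S_0$ with $p^\sigma_{\beta\sigma}=1$; moreover $p^\sigma_{\beta'\sigma}=0$ for all $\beta'\in S_0$ with $\beta'\neq\beta$.
   Context: Write $s(f),t(f)$ for source and target. A quasi-schemoid is a pair $(\mathcal C,S)$ with $\mathcal C$ a small category and $S$ a partition of $mor(\mathcal C)$ into nonempty blocks such that for all $\sigma,\tau,\mu\in S$ and $f,g\in\mu$ the sets $\{(a,b)\in\sigma\times\tau: s(a)=t(b), a\circ b=f\}$ and the analogous set for $g$ have equal cardinality, denoted $p^\mu_{\sigma\tau}$ (structure constant). An association schemoid is a triple $(\mathcal C,S,T)$ where $(\mathcal C,S)$ is a quasi-schemoid, every block of $S$ containing an endomorphism consists only of endomorphisms, and $T:\mathcal C\to\mathcal C$ is a contravariant functor with $T^2=\mathrm{id}$ and $\{T(f):f\in\sigma\}\in S$ for all $\sigma\in S$. With $J_0=\{1_x:x\in ob(\mathcal C)\}$, it is unital if every block meeting $J_0$ is contained in $J_0$. $S_0=\{\alpha\in S:\alpha\cap J_0\neq\emptyset\}$. *)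

(* Defs.v *)
(* Composition is a total function whose values
   only matter on composable pairs (s(a) = t(b)); [comp a b] is a ∘ b. *)
Record Category := {
  Ob : Type;
  Mor : Type;
  src : Mor -> Ob;
  tgt : Mor -> Ob;
  idm : Ob -> Mor;
  comp : Mor -> Mor -> Mor;
  src_id : forall x, src (idm x) = x;
  tgt_id : forall x, tgt (idm x) = x;
  src_comp : forall a b, src a = tgt b -> src (comp a b) = src b;
  tgt_comp : forall a b, src a = tgt b -> tgt (comp a b) = tgt a;
  comp_id_l : forall f, comp (idm (tgt f)) f = f;
  comp_id_r : forall f, comp f (idm (src f)) = f;
  comp_assoc : forall a b c, src a = tgt b -> src b = tgt c ->
      comp a (comp b c) = comp (comp a b) c
}.

Arguments src {_}. Arguments tgt {_}. Arguments idm {_}. Arguments comp {_}.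

Definition equipotent (A B : Type) : Prop :=
  exists h : A -> B, (forall x y, h x = h y -> x = y) /\ (forall y, exists x, h x = y).

(* A partition S of mor(C) into nonempty blocks, encoded by a block type
   [Blk] and a surjective labelling [cls] : each morphism lies in exactly one
   block, and blocks are the (nonempty) fibres of [cls]. *)
Record Partition (C : Category) := {
  Blk : Type;
  cls : Mor C -> Blk;
  cls_surj : forall s : Blk, exists f, cls f = s
}.

Arguments Blk {_}. Arguments cls {_}.

Definition PairSet {C : Category} (S : Partition C) (sigma tau : Blk S) (f : Mor C) : Type :=
  { ab : Mor C * Mor C |
    cls S (fst ab) = sigma /\ cls S (snd ab) = tau /\
    src (fst ab) = tgt (snd ab) /\ comp (fst ab) (snd ab) = f }.

Definition is_quasi_schemoid {C : Category} (S : Partition C) : Prop :=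
  forall sigma tau mu : Blk S, forall f g : Mor C,
    cls S f = mu -> cls S g = mu ->
    equipotent (PairSet S sigma tau f) (PairSet S sigma tau g).

(* "p^mu_{sigma tau} = n" (a finite cardinal): the common cardinality of the
   sets PairSet S sigma tau f, f in mu, equals n. *)
Definition struct_const_eq {C : Category} (S : Partition C) (sigma tau mu : Blk S) (n : nat) : Prop :=
  forall f, cls S f = mu -> equipotent (PairSet S sigma tau f) {k : nat | k < n}.

Record ContraInvolution (C : Category) := {
  Tob : Ob C -> Ob C;
  Tmor : Mor C -> Mor C;
  T_src : forall f, src (Tmor f) = Tob (tgt f);
  T_tgt : forall f, tgt (Tmor f) = Tob (src f);
  T_id : forall x, Tmor (idm x) = idm (Tob x);
  T_comp : forall a b, src a = tgt b -> Tmor (comp a b) = comp (Tmor b) (Tmor a);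
  Tob_inv : forall x, Tob (Tob x) = x;
  Tmor_inv : forall f, Tmor (Tmor f) = f
}.

Arguments Tob {_}. Arguments Tmor {_}.

Definition is_association_schemoid {C : Category} (S : Partition C) (T : ContraInvolution C) : Prop :=
  is_quasi_schemoid S /\
  (forall sigma : Blk S, (exists f, cls S f = sigma /\ src f = tgt f) ->
       forall f, cls S f = sigma -> src f = tgt f) /\
  (forall sigma : Blk S, exists sigma' : Blk S,
       forall g, cls S g = sigma' <-> exists f, cls S f = sigma /\ g = Tmor T f).

Definition in_S0 {C : Category} (S : Partition C) (sigma : Blk S) : Prop :=
  exists x, cls S (idm x) = sigma.

Definition is_unital {C : Category} (S : Partition C) : Prop :=
  forall sigma : Blk S, in_S0 S sigma -> forall f, cls S f = sigma -> exists x, f = idm x.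

(* Main.v *)
Require Import Defs.
From Stdlib Require Import ProofIrrelevance Lia.

Section H.
Variable C : Category.
Variable S : Partition C.

Lemma S0_idm (HU : is_unital S) a : in_S0 S (cls S a) -> exists x, a = idm x.
Proof. intros H. exact (HU _ H a eq_refl). Qed.

Lemma right_pair (HU : is_unital S) sigma alpha g (p : PairSet S sigma alpha g) :
  in_S0 S alpha -> proj1_sig p = (g, idm (src g)) /\ cls S (idm (src g)) = alpha.
Proof.
  destruct p as [[a b] [H1 [H2 [H3 H4]]]]; simpl in *. intros H0.
  subst alpha. destruct (S0_idm HU b H0) as [x ->].
  rewrite tgt_id in H3. subst x. rewrite comp_id_r in H4. subst g. auto.
Qed.

Lemma left_pair (HU : is_unital S) sigma beta g (p : PairSet S beta sigma g) :
  in_S0 S beta -> proj1_sig p = (idm (tgt g), g) /\ cls S (idm (tgt g)) = beta.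
Proof.
  destruct p as [[a b] [H1 [H2 [H3 H4]]]]; simpl in *. intros H0.
  subst beta. destruct (S0_idm HU a H0) as [x ->].
  rewrite src_id in H3. subst x. rewrite comp_id_l in H4. subst g. auto.
Qed.

Lemma one_equip (A : Type) (a : A) (u : forall x y : A, x = y) :
  equipotent A {k : nat | k < 1}.
Proof.
  exists (fun _ => exist _ 0 (le_n 1)). split.
  - intros; apply u.
  - intros [k Hk]. exists a. assert (k = 0) by lia. subst. f_equal. apply proof_irrelevance.
Qed.

Lemma zero_equip (A : Type) (e : A -> False) : equipotent A {k : nat | k < 0}.
Proof.
  exists (fun x => False_rect _ (e x)). split.
  - intros x; destruct (e x).
  - intros [k Hk]; lia.
Qed.

Lemma sig_eq_pair sigma tau g (x y : PairSet S sigma tau g) :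
  proj1_sig x = proj1_sig y -> x = y.
Proof.
  destruct x, y; simpl; intros ->. f_equal. apply proof_irrelevance.
Qed.


End H.

Theorem lemma4p2 (C : Category) (S : Partition C) (T : ContraInvolution C)
  (HS : is_association_schemoid S T) (HU : is_unital S) :
  (forall sigma : Blk S,
     exists alpha : Blk S,
       in_S0 S alpha /\ struct_const_eq S sigma alpha sigma 1 /\
       (forall alpha' : Blk S, in_S0 S alpha' ->
          struct_const_eq S sigma alpha' sigma 1 -> alpha' = alpha) /\
       (forall alpha' : Blk S, in_S0 S alpha' -> alpha' <> alpha ->
          struct_const_eq S sigma alpha' sigma 0)) /\
  (forall sigma : Blk S,
     exists beta : Blk S,
       in_S0 S beta /\ struct_const_eq S beta sigma sigma 1 /\
       (forall beta' : Blk S, in_S0 S beta' ->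
          struct_const_eq S beta' sigma sigma 1 -> beta' = beta) /\
       (forall beta' : Blk S, in_S0 S beta' -> beta' <> beta ->
          struct_const_eq S beta' sigma sigma 0)).
Proof.
  destruct HS as [HQ _]. split; intros sigma; destruct (cls_surj _ S sigma) as [f Hf].
  - assert (H0 : in_S0 S (cls S (idm (src f)))) by (eexists; reflexivity).
    assert (Hall : forall g, cls S g = sigma -> cls S (idm (src g)) = cls S (idm (src f))).
    { intros g Hg.
      destruct (HQ sigma (cls S (idm (src f))) sigma f g Hf Hg) as [h [_ _]].
      assert (p : PairSet S sigma (cls S (idm (src f))) f).
      { exists (f, idm (src f)); simpl; rewrite tgt_id, comp_id_r; auto. }
      exact (proj2 (right_pair _ _ HU _ _ _ (h p) H0)). }
    exists (cls S (idm (src f))). split; [exact H0|]. split; [|split].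
    + intros g Hg. apply one_equip.
      * exists (g, idm (src g)); simpl; rewrite tgt_id, comp_id_r; auto.
      * intros x y; apply sig_eq_pair.
        rewrite (proj1 (right_pair _ _ HU _ _ _ x H0)), (proj1 (right_pair _ _ HU _ _ _ y H0)); auto.
    + intros a' Ha' Hp. destruct (Hp f Hf) as [h [_ Hs]].
      destruct (Hs (exist _ 0 (le_n 1))) as [x _].
      rewrite <- (proj2 (right_pair _ _ HU _ _ _ x Ha')). auto.
    + intros a' Ha' Hne g Hg. apply zero_equip. intros x.
      apply Hne. rewrite <- (proj2 (right_pair _ _ HU _ _ _ x Ha')). auto.
  - assert (H0 : in_S0 S (cls S (idm (tgt f)))) by (eexists; reflexivity).
    assert (Hall : forall g, cls S g = sigma -> cls S (idm (tgt g)) = cls S (idm (tgt f))).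
    { intros g Hg.
      destruct (HQ (cls S (idm (tgt f))) sigma sigma f g Hf Hg) as [h [_ _]].
      assert (p : PairSet S (cls S (idm (tgt f))) sigma f).
      { exists (idm (tgt f), f); simpl; rewrite src_id, comp_id_l; auto. }
      exact (proj2 (left_pair _ _ HU _ _ _ (h p) H0)). }
    exists (cls S (idm (tgt f))). split; [exact H0|]. split; [|split].
    + intros g Hg. apply one_equip.
      * exists (idm (tgt g), g); simpl; rewrite src_id, comp_id_l; auto.
      * intros x y; apply sig_eq_pair.
        rewrite (proj1 (left_pair _ _ HU _ _ _ x H0)), (proj1 (left_pair _ _ HU _ _ _ y H0)); auto.
    + intros a' Ha' Hp. destruct (Hp f Hf) as [h [_ Hs]].
      destruct (Hs (exist _ 0 (le_n 1))) as [x _].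
      rewrite <- (proj2 (left_pair _ _ HU _ _ _ x Ha')). auto.
    + intros a' Ha' Hne g Hg. apply zero_equip. intros x.
      apply Hne. rewrite <- (proj2 (left_pair _ _ HU _ _ _ x Ha')). auto.
Qed.
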